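(* Let $R$ be an integral domain satisfying (R$_1$) whose integral closure $R'$ is a generalized Krull domain, and such that $P \cap R$ is a height one prime of $R$ for every height one prime $P$ of $R'$. If some maximal ideal of $R$ contains all height one primes of $R$, then $R$ is local.
   Context: ''Local'' means having a unique maximal ideal. A ring satisfies (R$_1$) if its localization at every height one prime is a valuation domain. A domain $A$ is a generalized Krull domain if (1) $A = \bigcap A_{\mathfrak{p}}$ over all height one primes $\mathfrak{p}$ of $A$, (2) every nonzero element lies in only finitely many height one primes, and (3) $A$ satisfies (R$_1$). *)

(* Defs.v *)
(* Domains are modelled as subrings of a fixed field K that is
   their field of fractions; ideals are Prop-valued subsets of K contained in
   the subring. *)
From HB Require Import structures.
From mathcomp Require Import all_boot all_order all_algebra.
Set Implicit Arguments. Unset Strict Implicit. Unset Printing Implicit Defensive.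
Import GRing.Theory.
Local Open Scope ring_scope.

Section CommAlg.
Variable K : fieldType.
Implicit Types (A I P Q M N : K -> Prop).

Definition is_ideal A I : Prop :=
  (forall x, I x -> A x) /\ I 0 /\
  (forall x y, I x -> I y -> I (x + y)) /\
  (forall a x, A a -> I x -> I (a * x)).

Definition is_prime A P : Prop :=
  is_ideal A P /\ ~ P 1 /\
  (forall x y, A x -> A y -> P (x * y) -> P x \/ P y).

Definition nonzero_set P : Prop := exists x, P x /\ x <> 0.

Definition height_one A P : Prop :=
  is_prime A P /\ nonzero_set P /\
  (forall Q, is_prime A Q -> nonzero_set Q -> (forall x, Q x -> P x) ->
     forall x, P x -> Q x).

Definition is_maximal A M : Prop :=
  is_ideal A M /\ ~ M 1 /\
  (forall I, is_ideal A I -> (forall x, M x -> I x) ->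
     (forall x, I x -> M x) \/ I 1).

Definition is_local A : Prop :=
  exists M, is_maximal A M /\
    forall N, is_maximal A N -> forall x, N x <-> M x.

Definition localization A P : K -> Prop :=
  fun x => exists a b, A a /\ A b /\ ~ P b /\ x = a / b.

Definition valuation_domain_in V : Prop :=
  forall x : K, x <> 0 -> V x \/ V x^-1.

Definition cond_R1 A : Prop :=
  forall P, height_one A P -> valuation_domain_in (localization A P).

Definition generalized_Krull A : Prop :=
  (forall x, (forall P, height_one A P -> localization A P x) -> A x) /\
  (forall x, A x -> x <> 0 ->
     exists (n : nat) (F : nat -> K -> Prop),
       forall P, height_one A P -> P x ->
         exists i, (i < n)%N /\ forall y, P y <-> F i y) /\
  cond_R1 A.

Definition integral_closure A : K -> Prop :=
  fun x => exists p : {poly K},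
    p \is monic /\ (forall i, A p`_i) /\ root p x.

End CommAlg.

Definition dom_in_frac (R : idomainType) : {fraction R} -> Prop :=
  fun x => exists r : R, x = (@FracField.tofrac R r).
Arguments dom_in_frac R _ : clear implicits.

(* Main.v *)
Require Import Defs.
From HB Require Import structures.
From mathcomp Require Import all_boot all_order all_algebra.
From Stdlib Require Import Classical.
Local Open Scope ring_scope.
Import GRing.Theory.

Section Integ.
Variable K : fieldType.
Variable A : K -> Prop.
Hypothesis A0 : A 0.
Hypothesis A1 : A 1.
Hypothesis AD : forall a b, A a -> A b -> A (a + b).
Hypothesis AN : forall a, A a -> A (- a).
Hypothesis AM : forall a b, A a -> A b -> A (a * b).

Lemma AX a n : A a -> A (a ^+ n).
Proof. move=> Ha; elim: n => [|n IH]; first by rewrite expr0. by rewrite exprS; apply: AM. Qed.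

Lemma inv_integral x : A x -> x != 0 -> integral_closure A x^-1 -> A x^-1.
Proof.
move=> Ax nx [p [mp [cp rp]]].
set y := x^-1.
have yx : y * x = 1 by rewrite mulVf.
have sz : (1 < size p)%N.
  case: (ltnP 1 (size p)) => // h.
  have /size1_polyC pC := h.
  move: rp mp; rewrite /root pC hornerC monicE lead_coefC => /eqP -> /eqP.
  by move=> e; move: (@oner_neq0 K); rewrite e eqxx.
move: rp; rewrite /root horner_coef => /eqP.
have [m Hs] : exists m, size p = m.+2.
  by exists (size p).-2; case: (size p) sz => [|[|k]].
rewrite Hs.
rewrite big_ord_recr /=.
have -> : p`_m.+1 = 1.
  by move: mp; rewrite monicE /lead_coef Hs /= => /eqP.
move=> /(congr1 (fun z => z * x ^+ m)).
rewrite mul0r mulrDl mul1r exprS -mulrA -exprMn yx expr1n mulr1.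
move/eqP; rewrite addrC addr_eq0 => /eqP e.
have -> : y = x^-1 by []. rewrite e.
apply: AN.
rewrite mulr_suml.
apply: (big_ind A) => //.
move=> i _.
have -> : p`_i * y ^+ i * x ^+ m = p`_i * x ^+ (m - i).
  have hi : (i <= m)%N by rewrite -ltnS.
  rewrite -mulrA; congr (_ * _).
  move: (nat_of_ord i) hi => k hk.
  by rewrite -(subnK hk) exprD mulrA (mulrC _ (x ^+ _)) mulrA -exprMn (mulrC x) yx expr1n mul1r addnK.
by apply: AM; [apply: cp | apply: AX].
Qed.

Lemma sub_integral x : A x -> integral_closure A x.
Proof.
move=> Ax; exists ('X - x%:P); split; first exact: monicXsubC.
split; last by rewrite /root hornerXsubC subrr.
move=> i; rewrite coefB coefX coefC.
case: i => [|[|i]] /=; rewrite ?sub0r ?subr0 //; exact: AN.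
Qed.
End Integ.

Theorem lemma4p1 (R : idomainType) :
  cond_R1 (dom_in_frac R) ->
  generalized_Krull (integral_closure (dom_in_frac R)) ->
  (forall P, height_one (integral_closure (dom_in_frac R)) P ->
     height_one (dom_in_frac R) (fun x => P x /\ dom_in_frac R x)) ->
  (exists M, is_maximal (dom_in_frac R) M /\
     forall P, height_one (dom_in_frac R) P -> forall x, P x -> M x) ->
  is_local (dom_in_frac R).
Proof.
move=> _ [GK _] H3 [M [maxM HM]].
set A := dom_in_frac R.
have A0 : A 0 by exists 0; rewrite rmorph0.
have A1 : A 1 by exists 1; rewrite rmorph1.
have AD : forall a b, A a -> A b -> A (a + b).
  by move=> a b [r ->] [s ->]; exists (r + s); rewrite rmorphD.
have AN : forall a, A a -> A (- a).
  by move=> a [r ->]; exists (- r); rewrite rmorphN.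
have AM : forall a b, A a -> A b -> A (a * b).
  by move=> a b [r ->] [s ->]; exists (r * s); rewrite rmorphM.
exists M; split => // N maxN.
have NM : forall x, N x -> M x.
  move=> x Nx.
  case: maxN => [[NA [N0 [_ NM]]] [N1 _]].
  have Ax := NA x Nx.
  case: (classic (x = 0)) => [->|nx].
    by case: maxM => [[_ [M0 _]] _].
  have nxb : x != 0 by apply/eqP.
  have ninv : ~ integral_closure A x^-1.
    move=> /(@inv_integral _ A A0 A1 AD AN AM x Ax nxb) Ai.
    by apply: N1; have := NM _ _ Ai Nx; rewrite mulVf.
  have [P [HP Px]] : exists P, height_one (integral_closure A) P /\ P x.
    apply: NNPP => hn; apply: ninv; apply: GK => P HP.
    have nPx : ~ P x by move=> Px; apply: hn; exists P.
    exists 1, x; split; first exact: (@sub_integral _ A A0 A1 AN _).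
    split; first exact: (@sub_integral _ A A0 A1 AN _).
    by split => //; rewrite div1r.
  apply: (HM _ (H3 P HP)); split => //.
move=> x; split; first exact: NM.
case: maxN => [NI [N1 Hmax]].
case: maxM => [MI [M1 _]].
case: (Hmax M MI NM) => [h|//].
by move=> Mx; apply: h.
Qed.
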